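(* Let $G$ be a finite abelian group and $q:G\to\mathbb Q/\mathbb Z$ a nondegenerate quadratic function. For any subgroup $A\subset G$, with $A^{\perp}=\{x\in G\mid b_q(x,A)=0\}$, $$\gamma(A,q|_A)=\gamma(G,q)\,\overline{\gamma(A^{\perp},q|_{A^{\perp}})},$$ where the bar denotes complex conjugation.
   Context: A quadratic function on a finite abelian group $G$ is a map $q:G\to\mathbb Q/\mathbb Z$ such that $b_q(x,y)=q(x+y)-q(x)-q(y)$ is $\mathbb Z$-bilinear. For a subgroup $H\subset G$, $H^{\perp}=\{x\in G\mid b_q(x,H)=0\}$; $q$ is nondegenerate if $G^{\perp}=0$. The normalized Gauss sum is $\gamma(G,q)=|G|^{-1/2}|G^{\perp}|^{-1/2}\sum_{x\in G}e^{2\pi i q(x)}$, where $|\cdot|$ denotes cardinality. For a restriction $q|_A$, the Gauss sum $\gamma(A,q|_A)$ is computed with $A$ in place of $G$ and $q|_A$ in place of $q$ (so the annihilator is taken inside $A$ with respect to $b_{q|_A}$). *)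

(* Defs.v *)
From mathcomp Require Import all_boot all_order all_algebra.
From mathcomp Require Import all_classical all_reals all_analysis.
From mathcomp Require Import complex.
Set Implicit Arguments. Unset Strict Implicit. Unset Printing Implicit Defensive.
Import Order.TTheory GRing.Theory Num.Theory.
Local Open Scope ring_scope.
Local Open Scope complex_scope.

(* A value of Q/Z is represented by a rational representative; two
   representatives are the same element of Q/Z iff their difference is an
   integer.  "r = 0 in Q/Z" is written [zeroQZ r]. *)
Definition zeroQZ (r : rat) : bool := r \is a Num.int.

Section QuadFun.
Variable G : finZmodType.

Definition bq (q : G -> rat) (x y : G) : rat := q (x + y) - q x - q y.

(* b_q is Z-bilinear as a map G x G -> Q/Z (biadditivity = Z-bilinearity) *)
Definition quadratic_fun (q : G -> rat) : Prop :=
  forall x y z : G,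
    zeroQZ (bq q (x + y) z - bq q x z - bq q y z) /\
    zeroQZ (bq q x (y + z) - bq q x y - bq q x z).

Definition is_subgroup (A : {set G}) : bool :=
  (0 \in A) && [forall x in A, forall y in A, x - y \in A].

Definition annih (q : G -> rat) (H : {set G}) : {set G} :=
  [set x | [forall h in H, zeroQZ (bq q x h)]].

(* annihilator of A inside A, w.r.t. b_{q|_A} *)
Definition annih_in (q : G -> rat) (A : {set G}) : {set G} := A :&: annih q A.

Definition nondegenerate_qf (q : G -> rat) : Prop := annih q [set: G] = [set 0].

Definition expi (R : realType) (r : rat) : R[i] :=
  (cos (2 * pi * ratr r) +i* sin (2 * pi * ratr r))%C.

Definition gauss (R : realType) (q : G -> rat) (A : {set G}) : R[i] :=
  ((Num.sqrt (#|A|%:R : R))^-1)%:C * ((Num.sqrt (#|annih_in q A|%:R : R))^-1)%:C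
  * \sum_(x in A) expi R (q x).

End QuadFun.

(* Main.v *)
Require Import Defs.
From mathcomp Require Import all_boot all_order all_algebra.
From mathcomp Require Import all_classical all_reals all_analysis.
From mathcomp Require Import complex.
From mathcomp Require Import ring lra.
Import Order.TTheory GRing.Theory Num.Theory.
Local Open Scope ring_scope.

Section E.
Variable R : realType.
Local Notation e := (expi R).

Lemma expiD r s : e (r + s) = e r * e s.
Proof.
rewrite /expi rmorphD /= mulrDr cosD sinD.
apply/eqP; rewrite eq_complex /=; apply/andP; split; apply/eqP; ring.
Qed.

Lemma expi0 : e 0 = 1.
Proof. by rewrite /expi rmorph0 mulr0 cos0 sin0. Qed.

Lemma expiN r : e (- r) * e r = 1.
Proof. by rewrite -expiD addNr expi0. Qed.

Lemma expi_conj r : Num.conj (e r) = e (- r).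
Proof.
rewrite /expi rmorphN /= mulrN cosN sinN.
by [].
Qed.

Lemma cos2pi_int (n : int) : cos (2 * pi * n%:~R) = 1 :> R.
Proof.
have Hn (k : nat) : cos (2 * pi * k%:R) = 1 :> R.
  have H := periodicn (@cosD2pi R) k 0; rewrite add0r cos0 in H; apply: (etrans _ H); congr cos.
  by rewrite -mulrnA -[pi *+ _]mulr_natr natrM mulrA [pi * _]mulrC.
case: n => k; first by rewrite -[Posz k]/(k%:Z) pmulrn Hn.
by rewrite NegzE mulrNz mulrN cosN pmulrn Hn.
Qed.

Lemma sin2pi_int (n : int) : sin (2 * pi * n%:~R) = 0 :> R.
Proof.
have Hn (k : nat) : sin (2 * pi * k%:R) = 0 :> R.
  have H := periodicn (@sinD2pi R) k 0; rewrite add0r sin0 in H; apply: (etrans _ H); congr sin.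
  by rewrite -mulrnA -[pi *+ _]mulr_natr natrM mulrA [pi * _]mulrC.
case: n => k; first by rewrite -[Posz k]/(k%:Z) pmulrn Hn.
by rewrite NegzE mulrNz mulrN sinN pmulrn Hn oppr0.
Qed.


Lemma expi_int r : r \is a Num.int -> e r = 1.
Proof. by move=> /intrP [n ->]; rewrite /expi rmorph_int cos2pi_int sin2pi_int. Qed.

Lemma expi_small t : 0 < t <= 1/2 -> e t != 1.
Proof.
move=> /andP [t0 t2].
have u0 : 0 < ratr t :> R by have := t0; rewrite -(ltr_rat R) rmorph0.
have u2 : ratr t <= 1/2 :> R.
  by rewrite -(ler_rat R) in t2; rewrite (le_trans t2) // fmorph_div /= rmorph1 rmorph_nat.
have pi0 := @pi_gt0 R.
have h : cos (2 * pi * ratr t) < cos 0 :> R.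
  rewrite ltr_cos ?in_itv /=; [nra| by rewrite lexx ltW | apply/andP; split; nra].
rewrite cos0 in h.
apply/negP => /eqP [hc _]; by rewrite hc ltxx in h.
Qed.

Lemma expi1_int r : e r = 1 -> r \is a Num.int.
Proof.
move=> er.
set n := Num.floor r; set t := r - n%:~R.
have et : e t = 1 by rewrite /t expiD er expi_int ?mul1r // rpredN intr_int.
have /andP [h1 h2] := floor_itv r; rewrite -/n intrD in h1 h2.
have t0 : 0 <= t by rewrite /t subr_ge0.
have t1 : t < 1 by rewrite /t ltrBlDl.
have [/eqP tz|tnz] := boolP (t == 0).
  by have -> : r = n%:~R by apply/eqP; rewrite -subr_eq0 -/t tz.
have tp : 0 < t by rewrite lt_def tnz t0.
have [th|th] := leP t (1/2).
  by have := @expi_small t; rewrite tp th et eqxx => /(_ isT).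
have : e (1 - t) = 1 by rewrite expiD expi_int ?rpred1 // mul1r -[e (-t)]mulr1 -et expiN.
move=> h; suff: 0 < 1 - t <= 1/2 by move/expi_small; rewrite h eqxx.
apply/andP; split; first by rewrite subr_gt0.
by rewrite lerBlDl -lerBlDr; apply/ltW; apply: (le_lt_trans _ th); rewrite le_eqVlt; apply/orP; left; apply/eqP; field.
Qed.

End E.
Section Grp.
Variable R : realType.
Local Notation e := (expi R).
Variable G : finZmodType.

Lemma sg0 (H : {set G}) : is_subgroup H -> 0 \in H.
Proof. by case/andP. Qed.

Lemma sgB (H : {set G}) x y : is_subgroup H -> x \in H -> y \in H -> x - y \in H.
Proof. by case/andP => _ /forall_inP h xH yH; have /forall_inP := h x xH; apply. Qed.

Lemma sgN (H : {set G}) y : is_subgroup H -> y \in H -> - y \in H.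
Proof. by move=> hH yH; rewrite -sub0r sgB // sg0. Qed.

Lemma sgD (H : {set G}) x y : is_subgroup H -> x \in H -> y \in H -> x + y \in H.
Proof. by move=> hH xH yH; rewrite -[y]opprK sgB // sgN. Qed.

Lemma sgT : is_subgroup [set: G].
Proof. by apply/andP; split; [rewrite inE | apply/forall_inP => x _; apply/forall_inP => y _; rewrite inE]. Qed.

Lemma char_sum (H : {set G}) (f : G -> rat) : is_subgroup H ->
  (forall x y, x \in H -> y \in H -> zeroQZ (f (x + y) - f x - f y)) ->
  \sum_(h in H) e (f h) = if [forall h in H, zeroQZ (f h)] then (#|H|%:R : R[i]) else 0.
Proof.
move=> hH hf; case: ifP => [/forall_inP all | /negbT].
  rewrite (eq_bigr (fun _ => 1)) ?sumr_const // => h hh.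
  by apply: expi_int; apply: all.
rewrite negb_forall_in => /existsP [h0 /andP [h0H nz]].
set S := \sum_(h in H) _.
have eS : S = S * e (f h0).
  rewrite {1}/S (reindex_inj (addIr h0)) /= mulr_suml.
  apply: eq_big => [h | h hh].
    apply/idP/idP => hh; last exact: sgD.
    by rewrite -(addrK h0 h) sgB.
  have E : f (h + h0) = (f (h + h0) - f h - f h0) + (f h + f h0) by ring.
  rewrite {1}E expiD expi_int ?mul1r ?expiD //; apply: hf => //; by rewrite -(addrK h0 h) sgB.
have : S * (1 - e (f h0)) = 0 by rewrite mulrBr mulr1 -eS subrr.
move/eqP; rewrite mulf_eq0 subr_eq0 => /orP [/eqP //|/eqP h1].
by move: nz; rewrite /zeroQZ (@expi1_int R) // -h1.
Qed.


Variable q : G -> rat.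
Hypothesis hq : quadratic_fun q.
Hypothesis hnd : nondegenerate_qf q.

Lemma bqC x y : bq q x y = bq q y x.
Proof. by rewrite /bq [y + x]addrC addrAC. Qed.

Lemma bq_addl x y z : zeroQZ (bq q (x + y) z - bq q x z - bq q y z).
Proof. by case: (hq x y z). Qed.
Lemma bq_addr x y z : zeroQZ (bq q x (y + z) - bq q x y - bq q x z).
Proof. by case: (hq x y z). Qed.

Lemma annihE B x : (x \in annih q B) = [forall h in B, zeroQZ (bq q x h)].
Proof. by rewrite inE. Qed.

Lemma annih_sub B : is_subgroup (annih q B).
Proof.
apply/andP; split.
  rewrite annihE; apply/forall_inP => h _.
  have -> : bq q 0 h = - (bq q (0 + 0) 0 - bq q 0 0 - bq q 0 0).
    by rewrite /bq !add0r; ring.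
  by rewrite /zeroQZ rpredN; apply: bq_addl.
apply/forall_inP => x; rewrite annihE => /forall_inP hx.
apply/forall_inP => y; rewrite annihE => /forall_inP hy.
rewrite annihE; apply/forall_inP => h hh.
have := bq_addl (x - y) y h; rewrite subrK => H.
have -> : bq q (x - y) h = (bq q x h - bq q y h) - (bq q x h - bq q (x - y) h - bq q y h) by ring.
rewrite /zeroQZ; apply: rpredB; [apply: rpredB; [exact: hx | exact: hy] | exact: H].
Qed.

Lemma card_annih B : is_subgroup B -> (#|B| * #|annih q B| = #|G|)%N.
Proof.
move=> hB.
pose T := \sum_(x : G) \sum_(a in B) e (bq q x a).
have T1 : T = (#|B| * #|annih q B|)%:R.
  rewrite /T (eq_bigr (fun x => if x \in annih q B then (#|B|%:R : R[i]) else 0)).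
    by rewrite -big_mkcond sumr_const -mulrnA natrM mulr_natl. 
  move=> x _; rewrite char_sum //; last by move=> a b _ _; exact: bq_addr.
  by rewrite inE.
have T2 : T = #|G|%:R.
  rewrite /T exchange_big /= (eq_bigr (fun a => if a == 0 then (#|G|%:R : R[i]) else 0)).
    by rewrite (bigD1 0) ?sg0 //= eqxx big1 ?addr0 // => i /andP [_ /negbTE ->] //.
  move=> a aB.
  rewrite (eq_bigl (fun x => x \in [set: G])); last by move=> x; rewrite inE.
  rewrite char_sum ?sgT //; last by move=> x y _ _; exact: bq_addl.
  have -> : [forall h in [set: G], zeroQZ (bq q h a)] = (a \in annih q [set: G]).
    rewrite annihE; apply: eq_forallb => h; by rewrite bqC.
  by rewrite hnd inE cardsT.
by apply/esym/eqP; move: T1; rewrite T2 => /eqP; rewrite eqr_nat.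
Qed.

Lemma annihK A : is_subgroup A -> annih q (annih q A) = A.
Proof.
move=> hA; apply/esym/eqP; rewrite eqEcard; apply/andP; split.
  apply/fintype.subsetP => a aA; rewrite annihE; apply/forall_inP => h.
  by rewrite annihE bqC => /forall_inP; apply.
have h1 := card_annih A hA; have h2 := card_annih _ (annih_sub A).
have p : (0 < #|annih q A|)%N by apply/card_gt0P; exists 0; exact: sg0 (annih_sub A).
by rewrite -(leq_pmul2l p) h2 mulnC h1.
Qed.


Lemma main_sum A : is_subgroup A ->
  (\sum_(x in [set: G]) e (q x)) * Num.conj (\sum_(y in annih q A) e (q y))
  = #|annih q A|%:R * \sum_(x in A) e (q x).
Proof.
move=> hA; set P := annih q A.
have hP : is_subgroup P by exact: annih_sub.
rewrite rmorph_sum /= mulr_sumr.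
transitivity (\sum_(y in P) \sum_(z : G) e (q z) * e (bq q z y)).
  apply: eq_bigr => y yP; rewrite expi_conj mulr_suml.
  rewrite (eq_bigl (fun x => true)); last by move=> x; rewrite inE.
  rewrite (reindex_inj (addIr y)) /=; apply: eq_bigr => z _.
  by rewrite -!expiD; congr e; rewrite /bq; ring.
rewrite exchange_big /=.
transitivity (\sum_(z : G) (if z \in A then e (q z) * #|P|%:R else 0)).
  apply: eq_bigr => z _; rewrite -mulr_sumr char_sum //; last by move=> a b _ _; exact: bq_addr.
  have -> : [forall h in P, zeroQZ (bq q z h)] = (z \in annih q P) by rewrite inE.
  by rewrite /P annihK //; case: ifP; rewrite ?mulr0.
by rewrite -big_mkcond /= mulr_sumr; apply: eq_bigr => z _; apply: mulrC.
Qed.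

End Grp.

Theorem lemma1p2 (R : realType) (G : finZmodType) (q : G -> rat)
  (hq : quadratic_fun q) (hnd : nondegenerate_qf q)
  (A : {set G}) (hA : is_subgroup A) :
  gauss R q A = gauss R q [set: G] * Num.conj (gauss R q (annih q A)).
Proof.
set P := annih q A.
have hP : is_subgroup P by exact: annih_sub.
have hrad : annih_in q P = annih_in q A by rewrite /annih_in /P annihK // finset.setIC.
have hG : annih_in q [set: G] = [set 0] by rewrite /annih_in hnd finset.setTI.
have hc : (#|A| * #|P| = #|G|)%N by exact: (card_annih R).
have hm := main_sum R G q hq hnd A hA.
have cR (x : R) : Num.conj (x%:C)%C = (x%:C)%C by apply: conjc_real.
rewrite /gauss hrad hG cards1 mulr1n sqrtr1 invr1 -/P.
set SA := \sum_(x in A) _; set SG := \sum_(x in [set: G]) _; set SP := \sum_(x in P) _.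
set K := ((Num.sqrt (#|annih_in q A|%:R : R))^-1)%:C%C.
set a := (Num.sqrt (#|A|%:R : R))^-1.
set b := (Num.sqrt (#|[set: G]|%:R : R))^-1.
set c := (Num.sqrt (#|P|%:R : R))^-1.
have Ea : (a%:C = b%:C * c%:C * #|P|%:R)%C.
  rewrite -(rmorph_nat (real_complex R)) -!rmorphM; congr (_%:C)%C.
  have pP : (0 < #|P|)%N by apply/card_gt0P; exists 0; exact: sg0 hP.
  have pA : (0 < #|A|)%N by apply/card_gt0P; exists 0; exact: sg0 hA.
  have sP : Num.sqrt (#|P|%:R : R) != 0 by rewrite sqrtr_eq0 -ltNge ltr0n.
  have sA : Num.sqrt (#|A|%:R : R) != 0 by rewrite sqrtr_eq0 -ltNge ltr0n.
  rewrite /a /b /c cardsT -hc natrM sqrtrM ?ler0n //.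
  have e2 : (#|P|%:R : R) = Num.sqrt (#|P|%:R : R) ^+ 2 by rewrite sqr_sqrtr ?ler0n.
  move: sP; set sp := Num.sqrt (#|P|%:R : R) => sP.
  move: sA; set sa := Num.sqrt (#|A|%:R : R) => sA.
  rewrite e2 -/sp; field; by rewrite sA sP.
transitivity (b%:C * c%:C * K * (SG * Num.conj SP))%C.
  rewrite hm -/P -/SA Ea; ring.
by rewrite !rmorphM /= !cR rmorph1; ring.
Qed.
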